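(* Let $f:\mathbb{R}^n\to(-\infty,+\infty]$ be proper, lower semicontinuous and prox-bounded with threshold $\lambda_f>0$, let $0<\lambda<\lambda_f$ and let $x\in\operatorname{dom}f$. Then the following are equivalent: (a) $P_\lambda f(x)$ is a singleton; (b) $e_\lambda f$ is strictly differentiable at $x$; (c) $(\lambda f+j)^*$ is (strictly) differentiable at $x$; (d) there exists $u\in P_\lambda f(x)$ such that $\lambda f+j$ is essentially strongly convex at $u$ for $x$. When one of these holds, $P_\lambda f(x)=\{\nabla(\lambda f+j)^*(x)\}$.
   Context: $j:=\frac12\|\cdot\|^2$; $g^*$ denotes the Legendre–Fenchel conjugate. $e_\lambda f(x):=\inf_y\{f(y)+\frac1{2\lambda}\|y-x\|^2\}$, $P_\lambda f(x):=\operatorname{argmin}_y\{f(y)+\frac1{2\lambda}\|y-x\|^2\}$; prox-bounded with threshold $\lambda_f=\sup\{\lambda>0:e_\lambda f(x)>-\infty\text{ for some }x\}$. Let $\Gamma_0$ be the class of proper lsc convex $\psi:[0,\infty)\to[0,\infty]$ with $\psi(t)=0$ iff $t=0$. A proper lsc $g$ is essentially strongly convex at $u\in\operatorname{dom}g$ for $x\in\mathbb{R}^n$ if there is $\psi\in\Gamma_0$ with $g(y)\ge g(u)+\langle y-u,x\rangle+\psi(\|y-u\|)$ for all $y\in\mathbb{R}^n$. *)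

(* Defs.v *)
(* R : realType, R^n = 'rV[R]_n with the EUCLIDEAN
   inner product / norm defined below (not MathComp's sup-norm). *)
From HB Require Import structures.
From mathcomp Require Import all_boot all_order all_algebra.
From mathcomp Require Import all_classical all_reals.
From mathcomp Require Import ereal.
Set Implicit Arguments. Unset Strict Implicit. Unset Printing Implicit Defensive.
Import Order.TTheory GRing.Theory Num.Theory.
Local Open Scope classical_set_scope.
Local Open Scope ring_scope.

Section Defs.
Context {R : realType} {n : nat}.
Notation V := 'rV[R]_n.

Definition dotp (u v : V) : R := \sum_(i < n) u ord0 i * v ord0 i.
Definition enorm (u : V) : R := Num.sqrt (dotp u u).
Definition jsq (u : V) : R := 2^-1 * enorm u ^+ 2.

Definition never_minfty (f : V -> \bar R) := forall y, f y != -oo%E.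
Definition proper_fun (f : V -> \bar R) :=
  never_minfty f /\ exists y, (f y < +oo)%E.
Definition lsc (f : V -> \bar R) :=
  forall x (a : R), (a%:E < f x)%E ->
    exists2 d : R, 0 < d & forall y, enorm (y - x) < d -> (a%:E < f y)%E.
Definition in_dom (f : V -> \bar R) (x : V) := (f x < +oo)%E.

Definition moreau_env (f : V -> \bar R) (lam : R) (x : V) : \bar R :=
  ereal_inf [set (f y + ((2 * lam)^-1 * enorm (y - x) ^+ 2)%:E)%E | y in [set: V]].
Definition prox_map (f : V -> \bar R) (lam : R) (x : V) : set V :=
  [set y | forall z, (f y + ((2 * lam)^-1 * enorm (y - x) ^+ 2)%:E
                      <= f z + ((2 * lam)^-1 * enorm (z - x) ^+ 2)%:E)%E].

Definition prox_bounded (f : V -> \bar R) :=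
  exists2 lam : R, 0 < lam & exists x, (-oo < moreau_env f lam x)%E.
Definition prox_threshold (f : V -> \bar R) : \bar R :=
  ereal_sup [set lam%:E | lam in [set lam : R | 0 < lam /\
                                     exists x, (-oo < moreau_env f lam x)%E]].

Definition conj (g : V -> \bar R) (x : V) : \bar R :=
  ereal_sup [set ((dotp y x)%:E - g y)%E | y in [set: V]].

Definition scaled_plus_j (f : V -> \bar R) (lam : R) (y : V) : \bar R :=
  (lam%:E * f y + (jsq y)%:E)%E.

Definition is_gradient (h : V -> \bar R) (x v : V) :=
  (exists2 d0 : R, 0 < d0 & forall y, enorm (y - x) < d0 -> h y \is a fin_num) /\
  forall eps : R, 0 < eps -> exists2 d : R, 0 < d & forall y, enorm (y - x) < d ->
    `| fine (h y) - fine (h x) - dotp v (y - x) | <= eps * enorm (y - x).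
Definition differentiable_at (h : V -> \bar R) (x : V) := exists v, is_gradient h x v.

Definition strictly_differentiable_at (h : V -> \bar R) (x : V) :=
  exists v : V,
  (exists2 d0 : R, 0 < d0 & forall y, enorm (y - x) < d0 -> h y \is a fin_num) /\
  forall eps : R, 0 < eps -> exists2 d : R, 0 < d & forall y z,
    enorm (y - x) < d -> enorm (z - x) < d ->
    `| fine (h y) - fine (h z) - dotp v (y - z) | <= eps * enorm (y - z).

(* the class Gamma_0 : proper lsc convex psi : [0,oo) -> [0,oo],
   psi t = 0 iff t = 0 (values of psi at t < 0 are irrelevant) *)
Definition Gamma0 (psi : R -> \bar R) :=
  [/\ (forall t, 0 <= t -> (0 <= psi t)%E),
      (forall t, 0 <= t -> (psi t = 0%E <-> t = 0)),
      (forall s t a : R, 0 <= s -> 0 <= t -> 0 <= a -> a <= 1 ->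
         (psi (a * s + (1 - a) * t)%R <= a%:E * psi s + (1 - a)%R%:E * psi t)%E) &
      (forall t (b : R), 0 <= t -> (b%:E < psi t)%E ->
         exists2 d : R, 0 < d & forall s, 0 <= s -> `|s - t|%R < d -> (b%:E < psi s)%E)].

Definition ess_strongly_convex_at (g : V -> \bar R) (u x : V) :=
  in_dom g u /\
  exists psi, Gamma0 psi /\
    forall y, (g u + (dotp (y - u) x)%:E + psi (enorm (y - u)) <= g y)%E.

End Defs.

(* Main.v *)
Require Import Defs.
From HB Require Import structures.
From mathcomp Require Import all_boot all_order all_algebra.
From mathcomp Require Import all_classical all_reals.
From mathcomp Require Import ereal topology normedtype.
From mathcomp Require Import ring lra.
Import Order.TTheory GRing.Theory Num.Theory.
Import numFieldNormedType.Exports.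
Local Open Scope classical_set_scope.
Local Open Scope ring_scope.


Section Basics.
Context {R : realType} {n : nat}.
Local Notation V := 'rV[R]_n.

Lemma dotpC (u v : V) : dotp u v = dotp v u.
Proof. by apply: eq_bigr => i _; rewrite mulrC. Qed.

Lemma dotpDl (u v w : V) : dotp (u + v) w = dotp u w + dotp v w.
Proof. by rewrite /dotp -big_split; apply: eq_bigr => i _; rewrite mxE mulrDl. Qed.

Lemma dotpZl (k : R) (u v : V) : dotp (k *: u) v = k * dotp u v.
Proof. by rewrite /dotp mulr_sumr; apply: eq_bigr => i _; rewrite mxE mulrA. Qed.

Lemma dotpNl (u v : V) : dotp (- u) v = - dotp u v.
Proof. by rewrite /dotp -sumrN; apply: eq_bigr => i _; rewrite mxE mulNr. Qed.

Lemma dotpBl (u v w : V) : dotp (u - v) w = dotp u w - dotp v w.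
Proof. by rewrite dotpDl dotpNl. Qed.

Lemma dotpDr (u v w : V) : dotp w (u + v) = dotp w u + dotp w v.
Proof. by rewrite dotpC dotpDl !(dotpC w). Qed.

Lemma dotpZr (k : R) (u v : V) : dotp v (k *: u) = k * dotp v u.
Proof. by rewrite dotpC dotpZl dotpC. Qed.

Lemma dotpNr (u v : V) : dotp v (- u) = - dotp v u.
Proof. by rewrite dotpC dotpNl dotpC. Qed.

Lemma dotpBr (u v w : V) : dotp w (u - v) = dotp w u - dotp w v.
Proof. by rewrite dotpDr dotpNr. Qed.

Lemma dotp0l (u : V) : dotp 0 u = 0.
Proof. by rewrite /dotp big1 // => i _; rewrite mxE mul0r. Qed.

Lemma dotp0r (u : V) : dotp u 0 = 0.
Proof. by rewrite dotpC dotp0l. Qed.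

Lemma dotp_ge0 (u : V) : 0 <= dotp u u.
Proof. by apply: sumr_ge0 => i _; rewrite -expr2 sqr_ge0. Qed.

Lemma dotp_eq0 (u : V) : dotp u u = 0 -> u = 0.
Proof.
move=> /eqP; rewrite psumr_eq0; last by move=> i _; rewrite -expr2 sqr_ge0.
move=> /allP H; apply/rowP => i; rewrite mxE.
have := H i (mem_index_enum _); rewrite mulf_eq0 orbb => /eqP ->.
by [].
Qed.

Lemma enorm2 (u : V) : enorm u ^+ 2 = dotp u u.
Proof. by rewrite /enorm sqr_sqrtr // dotp_ge0. Qed.

Lemma enorm_ge0 (u : V) : 0 <= enorm u.
Proof. exact: sqrtr_ge0. Qed.

Lemma enorm0 : enorm (0 : V) = 0.
Proof. by rewrite /enorm dotp0l sqrtr0. Qed.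

Lemma enorm_eq0 (u : V) : enorm u = 0 -> u = 0.
Proof.
move=> /eqP; rewrite /enorm sqrtr_eq0 => H; apply: dotp_eq0.
by apply/eqP; rewrite eq_le H dotp_ge0.
Qed.

Lemma enormN (u : V) : enorm (- u) = enorm u.
Proof. by rewrite /enorm dotpNl dotpNr opprK. Qed.

Lemma enormB (u v : V) : enorm (u - v) = enorm (v - u).
Proof. by rewrite -enormN opprB. Qed.

Lemma enormZ (k : R) (u : V) : enorm (k *: u) = `|k| * enorm u.
Proof.
rewrite /enorm dotpZl dotpZr mulrA -expr2 sqrtrM ?sqr_ge0 //.
by rewrite sqrtr_sqr.
Qed.

Lemma CS_sq (a b : V) : dotp a b ^+ 2 <= dotp a a * dotp b b.
Proof.
have [B0|Bpos] := eqVneq (dotp b b) 0.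
  by rewrite (dotp_eq0 _ B0) dotp0r dotp0l mulr0 expr2 mulr0.
have Bgt0 : 0 < dotp b b by rewrite lt_def Bpos dotp_ge0.
set A := dotp a b; set B := dotp b b.
have := dotp_ge0 (B *: a - A *: b).
rewrite !dotpBl !dotpBr !dotpZl !dotpZr (dotpC b a) -/A -/B => H.
have H2 : 0 <= B * (B * dotp a a - A ^+ 2).
  by apply: le_trans H _; rewrite le_eqVlt; apply/orP; left; apply/eqP; ring.
rewrite pmulr_rge0 // subr_ge0 in H2.
by rewrite mulrC.
Qed.

Lemma CS (a b : V) : `|dotp a b| <= enorm a * enorm b.
Proof.
rewrite /enorm -sqrtrM ?dotp_ge0 // -sqrtr_sqr.
by apply: ler_wsqrtr; apply: CS_sq.
Qed.

Lemma dotp_le (a b : V) : dotp a b <= enorm a * enorm b.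
Proof. exact: le_trans (ler_norm _) (CS a b). Qed.

Lemma enormD (a b : V) : enorm (a + b) <= enorm a + enorm b.
Proof.
rewrite {1}/enorm -[enorm a + enorm b]ger0_norm ?addr_ge0 ?enorm_ge0 //.
rewrite -sqrtr_sqr; apply: ler_wsqrtr.
rewrite dotpDl !dotpDr (dotpC b a) sqrrD !enorm2.
have := dotp_le a b; lra.
Qed.

Lemma coord_le (u : V) i : u ord0 i ^+ 2 <= dotp u u.
Proof.
rewrite /dotp (bigD1 i) //= -expr2 lerDl.
by apply: sumr_ge0 => j _; rewrite -expr2 sqr_ge0.
Qed.

Lemma box_le (u : V) (e : R) : (forall i, `|u ord0 i| <= e) ->
  dotp u u <= n%:R * e ^+ 2.
Proof.
move=> H; rewrite /dotp.
apply: le_trans (_ : \sum_(i < n) e ^+ 2 <= _).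
  apply: ler_sum => i _; rewrite -expr2 -real_normK ?num_real //.
  by rewrite lerXn2r ?nnegrE ?normr_ge0 // (le_trans _ (H i)).
by rewrite sumr_const card_ord mulr_natl.
Qed.

End Basics.


Section Compact.
Context {R : realType} {n : nat}.
Local Notation V := 'rV[R]_n.

Lemma enorm_lt (u : V) (d : R) : 0 < d -> dotp u u < d ^+ 2 -> enorm u < d.
Proof.
move=> d0 H; rewrite /enorm -(ger0_norm (ltW d0)) -sqrtr_sqr ltr_sqrt //.
by rewrite exprn_gt0.
Qed.

Lemma enorm_nbhs (p : V) (d : R) : 0 < d -> nbhs p [set y | enorm (y - p) < d].
Proof.
move=> d0; apply/nbhs_ballP; exists (d / (n.+1)%:R).
  by rewrite /= divr_gt0.
move=> y [_ H] /=; apply: enorm_lt => //.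
set e := d / (n.+1)%:R.
have e0 : 0 < e by rewrite divr_gt0.
apply: le_lt_trans (@box_le _ _ (y - p) e _) _; last first.
  have ed : d = e * (n.+1)%:R by rewrite /e divfK.
  rewrite ed -natr1.
  have n0 : 0 <= n%:R :> R by [].
  nra.
move=> i; rewrite mxE mxE.
have := H ord0 i; rewrite -ball_normE /ball_ /= => /ltW.
by rewrite distrC.
Qed.

Lemma key_compact (K : set V) (h : V -> \bar R) (c : R) :
  compact K -> lsc h -> (forall y, K y -> (c%:E < h y)%E) ->
  exists2 c', c < c' & forall y, K y -> (c'%:E <= h y)%E.
Proof.
move=> cK lh hc.
have [//|nex] := pselect (exists2 c', c < c' & forall y, K y -> (c'%:E <= h y)%E).
have H : forall e, 0 < e -> exists y, K y /\ (h y < (c + e)%:E)%E.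
  move=> e e0; apply: contrapT => Hn; apply: nex; exists (c + e).
    by rewrite ltrDl.
  move=> y Ky; rewrite leNgt; apply/negP => hy; apply: Hn; by exists y.
pose F := filter_from [set e : R | 0 < e]
  (fun e => [set y | K y /\ (h y < (c + e)%:E)%E]).
have FF : Filter F.
  apply: filter_from_filter; first by exists 1; rewrite /=.
  move=> i j i0 j0; exists (Num.min i j); first by rewrite /= lt_min i0 j0.
  move=> y [Ky hy]. hnf; split; split => //.
    by apply: lt_le_trans hy _; rewrite lee_fin lerD2l ge_min lexx.
  by apply: lt_le_trans hy _; rewrite lee_fin lerD2l ge_min lexx orbT.
have PF : ProperFilter F.
  apply: filter_from_proper => e e0; have [y [Ky hy]] := H e e0.
  by exists y.
have FK : F K by exists 1 => //= y [].
have [p [Kp clp]] := cK F PF FK.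
have hp := hc p Kp.
have [a [ca ahp]] : exists a : R, c < a /\ (a%:E < h p)%E.
  move: hp; case: (h p) => [r| |] //=.
    rewrite lte_fin => cr; exists ((c + r) / 2); split.
      lra.
    rewrite lte_fin; lra.
  by move=> _; exists (c + 1); split; [lra| exact: ltry].
have [d d0 Hd] := lh p a ahp.
have Fa : F [set y | K y /\ (h y < (c + (a - c))%:E)%E].
  by exists (a - c) => //=; rewrite subr_gt0.
have [y [[_ hy] yd]] := clp _ _ Fa (enorm_nbhs p d d0).
have := Hd y yd; rewrite addrC subrK in hy.
by rewrite ltNge (ltW hy).
Qed.

Lemma box_compact (u : V) (T : R) :
  compact [set y : V | forall i, `|y ord0 i - u ord0 i| <= T].
Proof.
have := @rV_compact _ n (fun i => `[u ord0 i - T, u ord0 i + T]%classic) (fun i => @segment_compact _ _ _).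
congr compact; apply/seteqP; split => y /= H i; have := H i.
  by rewrite /= in_itv /= -ler_distlC distrC.
by rewrite /= in_itv /= -ler_distlC distrC.
Qed.

End Compact.


Section Young.
Context {R : realType} {n : nat}.
Local Notation V := 'rV[R]_n.

Lemma dotp_sqD (a b : V) : dotp (a + b) (a + b) = dotp a a + 2 * dotp a b + dotp b b.
Proof. rewrite dotpDl !dotpDr (dotpC b a); ring. Qed.

Lemma young (Y W : V) (a b : R) : 0 < a ->
  2 * b * dotp Y W <= a * dotp Y Y + b ^+ 2 / a * dotp W W.
Proof.
move=> a0; have := dotp_ge0 (a *: Y - b *: W).
rewrite !dotpBl !dotpBr !dotpZl !dotpZr (dotpC W Y) => H.
rewrite -(ler_pM2l a0).
have -> : a * (a * dotp Y Y + b ^+ 2 / a * dotp W W) =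
  a * (a * dotp Y Y) + b * (b * dotp W W).
  by field; rewrite gt_eqF.
lra.
Qed.

Lemma abs_le1 (r : R) : `|r| <= 1 + r ^+ 2.
Proof.
rewrite -real_normK ?num_real //; have := normr_ge0 r.
have := sqr_ge0 (`|r| - 1); nra.
Qed.

Lemma lsc_add (h : V -> \bar R) (q : V -> R) : lsc h ->
  (forall y e, 0 < e -> exists2 d, 0 < d & forall y', enorm (y' - y) < d ->
     `|q y' - q y| < e) ->
  lsc (fun y => h y + (q y)%:E)%E.
Proof.
move=> lh cq z a Ha.
have [b [hb ab]] : exists b : R, (b%:E < h z)%E /\ a < b + q z.
  move: Ha; case: (h z) => [r| |] /=.
  - rewrite lte_fin => Ha; exists ((r + a - q z) / 2); split.
      rewrite lte_fin; lra.
    lra.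
  - by move=> _; exists (a - q z + 1); split; [exact: ltry | lra].
  - by rewrite ltNge leNye.
have dl0 : 0 < b + q z - a by lra.
have [d1 d10 H1] := lh z b hb.
have [d2 d20 H2] := cq z _ dl0.
exists (Num.min d1 d2); first by rewrite lt_min d10 d20.
move=> y; rewrite lt_min => /andP [y1 y2].
have hy := H1 y y1; have := H2 y y2; rewrite ltr_norml => /andP [qa qb].
move: hy; case: (h y) => [r| |] //=.
  rewrite !lte_fin => br; lra.
by move=> _; exact: ltry.
Qed.

Lemma cont_sq (k : R) (z : V) : 0 < k -> forall y e, 0 < e ->
  exists2 d, 0 < d & forall y', enorm (y' - y) < d ->
  `|k * enorm (y' - z) ^+ 2 - k * enorm (y - z) ^+ 2| < e.
Proof.
move=> k0 y e e0.
set A := y - z.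
have A0 := enorm_ge0 A.
have c0 : 0 < k * (1 + 2 * enorm A) by rewrite mulr_gt0 //; lra.
exists (Num.min 1 (e / (k * (1 + 2 * enorm A)))).
  by rewrite lt_min ltr01 divr_gt0.
move=> y'; rewrite lt_min => /andP [d1 d2].
set D := y' - y.
have eq1 : y' - z = D + A by rewrite /D /A addrA subrK.
have -> : k * enorm (y' - z) ^+ 2 - k * enorm (y - z) ^+ 2 =
  k * (dotp D D + 2 * dotp D A).
  rewrite eq1 !enorm2 dotp_sqD; ring.
rewrite normrM (gtr0_norm k0).
have t0 := enorm_ge0 D.
have h1 : `|dotp D D + 2 * dotp D A| <= enorm D * enorm D + 2 * (enorm D * enorm A).
  apply: le_trans (ler_normD _ _) _.
  have e1 : `|dotp D D| = enorm D * enorm D.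
    by rewrite -enorm2 ger0_norm ?sqr_ge0 // expr2.
  have e2 : `|2 * dotp D A| <= 2 * (enorm D * enorm A).
    by rewrite normrM ger0_norm // ler_wpM2l //; exact: CS.
  by rewrite e1 lerD2l.
have h2 : enorm D * enorm D + 2 * (enorm D * enorm A) <= enorm D * (1 + 2 * enorm A).
  by move: d1; rewrite -/D => d1; nra.
have h3 : enorm D * (1 + 2 * enorm A) < e / k.
  move: d2; rewrite -/D ltr_pdivlMr // => d2.
  rewrite ltr_pdivlMr //; apply: le_lt_trans d2.
  by rewrite le_eqVlt; apply/orP; left; apply/eqP; ring.
have h4 := le_lt_trans (le_trans h1 h2) h3.
apply: lt_le_trans (_ : k * _ < k * (e / k)) _; first by rewrite ltr_pM2l.
by rewrite mulrC divfK ?gt_eqF.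
Qed.

End Young.


Ltac dotp_ring := rewrite /dotp; do ?[rewrite -sumrB | rewrite mulr_sumr | rewrite -big_split /=];
  apply: eq_bigr => i _; rewrite !mxE; first [ring | (field; by rewrite ?pnatr_eq0)].

Section Alg.
Lemma lin1 {R : realType} {Ey Fp k A B D : R} : Ey <= Fp + k * A ->
  Ey - (Fp + k * B) - D <= k * (A - B) - D.
Proof. by move=> H; lra. Qed.
Lemma lin2 {R : realType} {Ez Fp k A B D : R} : Ez <= Fp + k * B ->
  k * (A - B) - D <= (Fp + k * A) - Ez - D.
Proof. by move=> H; lra. Qed.

Context {R : realType} {n : nat}.
Local Notation V := 'rV[R]_n.

Lemma alg1 (y z x u q : V) (k : R) :
  k * (enorm (q - y) ^+ 2 - enorm (q - z) ^+ 2) - dotp ((2 * k) *: (x - u)) (y - z)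
  = k * dotp (y - z) ((y - x) + (z - x) + 2 *: (u - q)).
Proof. rewrite !enorm2; dotp_ring. Qed.

Lemma bndW (y z x u q : V) (k r : R) : 0 < k ->
  enorm (y - x) <= r -> enorm (z - x) <= r -> enorm (u - q) <= r ->
  `|k * dotp (y - z) ((y - x) + (z - x) + 2 *: (u - q))| <= k * (4 * r) * enorm (y - z).
Proof.
move=> k0 h1 h2 h3; rewrite normrM gtr0_norm // -mulrA; apply: ler_wpM2l; first exact: ltW.
apply: le_trans (CS _ _) _; rewrite [X in _ <= X]mulrC; apply: ler_wpM2l; first exact: enorm_ge0.
apply: le_trans (enormD _ _) _; rewrite enormZ ger0_norm //.
apply: le_trans (lerD (enormD _ _) (lexx _)) _; lra.
Qed.

Lemma alg2 (u p x z : V) :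
  enorm (u - z) ^+ 2 - enorm (p - z) ^+ 2 + enorm (p - x) ^+ 2 - enorm (u - x) ^+ 2
  = 2 * dotp (p - u) (z - x).
Proof. rewrite !enorm2; dotp_ring. Qed.

Lemma alg3 (y z x : V) :
  jsq y - jsq z - dotp x (y - z) = dotp (y - z) (2^-1 *: ((y - x) + (z - x))).
Proof. rewrite /jsq !enorm2; dotp_ring. Qed.

Lemma alg4 (y u x : V) :
  jsq y - jsq u - dotp (y - u) x = 2^-1 * (enorm (y - x) ^+ 2 - enorm (u - x) ^+ 2).
Proof. rewrite /jsq !enorm2; dotp_ring. Qed.

Lemma alg5 (p z : V) (lam F k : R) : lam * k = 2^-1 ->
  dotp p z - lam * F - jsq p = jsq z - lam * (F + k * enorm (p - z) ^+ 2).
Proof.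
move=> hk; rewrite mulrDr mulrA hk /jsq !enorm2.
have -> : dotp (p - z) (p - z) = dotp p p - 2 * dotp p z + dotp z z by dotp_ring.
by field; rewrite ?pnatr_eq0.
Qed.

Lemma strict_diff (h : V -> \bar R) (x : V) :
  strictly_differentiable_at h x -> differentiable_at h x.
Proof.
move=> [v [H0 H]]; exists v; split => // eps e0.
have [d d0 Hd] := H eps e0; exists d => // y yx.
by apply: Hd => //; rewrite subrr enorm0.
Qed.

End Alg.

Section Prox.
Context {R : realType} {n : nat}.
Local Notation V := 'rV[R]_n.
Variable f : V -> \bar R.
Hypothesis fnm : never_minfty f.
Hypothesis lsf : lsc f.
Variable y0 : V.
Hypothesis fy0 : (f y0 < +oo)%E.
Variables (lam lam' C : R) (w : V).
Hypothesis lam0 : 0 < lam.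
Hypothesis lamlt : lam < lam'.
Hypothesis LB : forall y,
  (C%:E <= f y + ((2 * lam')^-1 * enorm (y - w) ^+ 2)%:E)%E.

Definition Ff y := fine (f y).
Definition kk := (2 * lam)^-1.

Lemma kk_gt0 : 0 < kk.
Proof. by rewrite invr_gt0 mulr_gt0. Qed.

Lemma lamkk : lam * kk = 2^-1.
Proof. by rewrite /kk invfM mulrA mulrC mulrA mulVf ?gt_eqF // mul1r. Qed.

Lemma fE {y} : (f y < +oo)%E -> f y = (Ff y)%:E.
Proof.
move=> H; rewrite /Ff fineK // fin_numE; apply/andP; split; first exact: fnm.
by rewrite -ltey.
Qed.

Lemma nfE {y} : ~ (f y < +oo)%E -> f y = +oo%E.
Proof.
move=> H; apply/eqP; apply: contrapT => Hne; apply: H.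
by rewrite ltey; apply/negP.
Qed.

Lemma coerc (z c : V) : exists2 a, 0 < a & exists b, forall y, (f y < +oo)%E ->
  a * enorm (y - c) ^+ 2 - b <= Ff y + kk * enorm (y - z) ^+ 2.
Proof.
have l0 := lam0; have l1 := lamlt.
set k' := (2 * lam')^-1.
have k'0 : 0 < k'.
  by rewrite invr_gt0 mulr_gt0 //; exact: lt_trans lam0 lamlt.
have kk' : k' < kk.
  rewrite -subr_gt0.
  have -> : kk - k' = (lam' - lam) / (2 * lam * lam').
    rewrite /kk /k'; field; rewrite (gt_eqF l0) andbT gt_eqF //; lra.
  rewrite divr_gt0 ?mulr_gt0 //; lra.
set W := c - w; set D := c - z.
have a40 : 0 < (kk - k') / 4 by rewrite divr_gt0 //; lra.
exists ((kk - k') / 2); first by rewrite divr_gt0 //; lra.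
exists (- C + k' * dotp W W - kk * dotp D D + k' ^+ 2 / ((kk - k') / 4) * dotp W W
  + (- kk) ^+ 2 / ((kk - k') / 4) * dotp D D).
move=> y fy; have := LB y; rewrite (fE fy) -EFinD lee_fin => Hy.
have e1 : y - w = (y - c) + W by rewrite /W addrA subrK.
have e2 : y - z = (y - c) + D by rewrite /D addrA subrK.
rewrite e1 in Hy; rewrite e2; rewrite -/k' in Hy.
have Y1 := young (y - c) W _ k' a40.
have Y2 := young (y - c) D _ (- kk) a40.
move: Hy Y1 Y2; clearbody W D; move: (y - c) => Y.
rewrite !enorm2 !dotp_sqD.
have YY0 := dotp_ge0 Y.
move: (dotp Y Y) (dotp Y W) (dotp Y D) (dotp W W) (dotp D D) YY0 => YY YW YD WW DD YY0.
move=> Hy Y1 Y2.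
have ek : (- kk) ^+ 2 = kk ^+ 2 by rewrite sqrrN.
rewrite ek in Y2 *.
set q1 := k' ^+ 2 / ((kk - k') / 4) in Y1 *.
set q2 := kk ^+ 2 / ((kk - k') / 4) in Y2 *.
lra.
Qed.


Definition psi (z y : V) := (f y + (kk * enorm (y - z) ^+ 2)%:E)%E.

Lemma psiE {z y} : (f y < +oo)%E -> psi z y = (Ff y + kk * enorm (y - z) ^+ 2)%:E.
Proof. by move=> fy; rewrite /psi (fE fy) EFinD. Qed.

Lemma psiI {z y} : ~ (f y < +oo)%E -> psi z y = +oo%E.
Proof. by move=> fy; rewrite /psi (nfE fy). Qed.

Lemma lsc_psi z : lsc (psi z).
Proof. have H := (lsc_add f (fun y => kk * enorm (y - z) ^+ 2) lsf (cont_sq kk z kk_gt0)). exact H. Qed.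

Lemma exists_prox z : exists p, prox_map f lam z p.
Proof.
have [a a0 [b Hb]] := coerc z z.
set M := Ff y0 + kk * enorm (y0 - z) ^+ 2.
set S := (M + b) / a.
set K := [set y : V | forall i, `|y ord0 i - z ord0 i| <= 1 + S].
have Kin : forall y, (f y < +oo)%E -> Ff y + kk * enorm (y - z) ^+ 2 <= M -> K y.
  move=> y fy H i.
  have H2 : enorm (y - z) ^+ 2 <= S.
    rewrite /S ler_pdivlMr //; have := Hb y fy; lra.
  apply: le_trans (abs_le1 _) _; rewrite lerD2l; apply: le_trans H2.
  by have := coord_le (y - z) i; rewrite !mxE enorm2.
have cK : compact K := box_compact z (1 + S).
set m := ereal_inf [set psi z y | y in K].
have y0K : K y0 by apply: Kin => //.
have mM : (m <= M%:E)%E.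
  by apply: ereal_inf_lbound; exists y0 => //; rewrite psiE.
have mb : ((- b)%:E <= m)%E.
  apply/ereal_infP => _ [y Ky <-].
  have [fy|fy] := pselect (f y < +oo)%E; last by rewrite psiI // leey.
  rewrite psiE // lee_fin; have := Hb y fy.
  have := sqr_ge0 (enorm (y - z)).
  have := kk_gt0; nra.
have mfin : m = (fine m)%:E.
  rewrite fineK // fin_numE; apply/andP; split.
    by apply/negP => /eqP mE; move: mb; rewrite mE.
  by apply/negP => /eqP mE; move: mM; rewrite mE.
have [p [Kp pm]] : exists p, K p /\ psi z p = m.
  apply: contrapT => Hn.
  have Hlt : forall y, K y -> ((fine m)%:E < psi z y)%E.
    move=> y Ky; rewrite -mfin lt_def; apply/andP; split.
      by apply/eqP => E; apply: Hn; exists y.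
    by apply: ereal_inf_lbound; exists y.
  have [c' c'm Hc'] := key_compact K (psi z) (fine m) cK (lsc_psi z) Hlt.
  have : (c'%:E <= m)%E.
    by apply/ereal_infP => _ [y Ky <-]; exact: Hc'.
  by rewrite mfin lee_fin leNgt c'm.
exists p => y; change (psi z p <= psi z y)%E.
rewrite pm.
have [Ky|Ky] := pselect (K y).
  by apply: ereal_inf_lbound; exists y.
have [fy|fy] := pselect (f y < +oo)%E; last by rewrite psiI // leey.
apply: (le_trans mM); rewrite psiE // lee_fin; apply: ltW; rewrite ltNge.
by apply/negP => H; apply: Ky; apply: Kin.
Qed.

Lemma prox_fin {z p} : prox_map f lam z p -> (f p < +oo)%E.
Proof.
move=> H; apply: contrapT => Hn; have : (psi z p <= psi z y0)%E by exact: H.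
by rewrite psiI // psiE // leye_eq.
Qed.

Lemma prox_ineq {z p y} : prox_map f lam z p -> (f y < +oo)%E ->
  Ff p + kk * enorm (p - z) ^+ 2 <= Ff y + kk * enorm (y - z) ^+ 2.
Proof.
move=> H fy; have : (psi z p <= psi z y)%E by exact: H.
by rewrite (psiE (prox_fin H)) (psiE fy) lee_fin.
Qed.

Lemma prox_intro z p : (f p < +oo)%E ->
  (forall y, (f y < +oo)%E ->
    Ff p + kk * enorm (p - z) ^+ 2 <= Ff y + kk * enorm (y - z) ^+ 2) ->
  prox_map f lam z p.
Proof.
move=> fp H y; change (psi z p <= psi z y)%E.
have [fy|fy] := pselect (f y < +oo)%E; last by rewrite (psiI fy) leey.
by rewrite psiE // psiE // lee_fin; apply: H.
Qed.

Lemma env_eq {z p} : prox_map f lam z p ->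
  moreau_env f lam z = (Ff p + kk * enorm (p - z) ^+ 2)%:E.
Proof.
move=> H; have fp := prox_fin H.
apply/le_anti/andP; split.
  by apply: ereal_inf_lbound; exists p => //; rewrite -psiE.
apply/ereal_infP => _ [y _ <-]; rewrite -(@psiE z p fp); exact: H.
Qed.

Lemma scale_prox {Fp Fy A B : R} : Fp + kk * A <= Fy + kk * B ->
  lam * Fp + 2^-1 * A <= lam * Fy + 2^-1 * B.
Proof.
rewrite -(ler_pM2l lam0) !mulrDr !mulrA lamkk //.
Qed.

Lemma conj_eq {z p} : prox_map f lam z p ->
  conj (scaled_plus_j f lam) z = (dotp p z - lam * Ff p - jsq p)%:E.
Proof.
move=> H; have fp := prox_fin H.
apply/le_anti/andP; split.
  apply/ereal_supP => _ [y _ <-]; rewrite /scaled_plus_j.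
  have [fy|fy] := pselect (f y < +oo)%E; last first.
    by rewrite (nfE fy) gt0_muley ?lte_fin // addye //= leNye.
  rewrite (fE fy) -EFinM -EFinD lee_fin.
  have := scale_prox (prox_ineq H fy).
  rewrite /jsq !enorm2 !dotpBl !dotpBr (dotpC z p) (dotpC z y); lra.
apply: ereal_sup_ubound; exists p => //.
rewrite /scaled_plus_j (fE fp) -EFinM -EFinD.
by rewrite opprD addrA.
Qed.

Definition pr z : V := proj1_sig (cid (exists_prox z)).
Lemma prP z : prox_map f lam z (pr z).
Proof. exact: (proj2_sig (cid (exists_prox z))). Qed.
Definition Ee z := Ff (pr z) + kk * enorm (pr z - z) ^+ 2.
Lemma envE z : moreau_env f lam z = (Ee z)%:E.
Proof. exact: env_eq (prP z). Qed.
Lemma Ee_le z q : (f q < +oo)%E -> Ee z <= Ff q + kk * enorm (q - z) ^+ 2.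
Proof. exact: prox_ineq (prP z). Qed.
Lemma conjE z : conj (scaled_plus_j f lam) z = (jsq z - lam * Ee z)%:E.
Proof. by rewrite (conj_eq (prP z)) /Ee (alg5 _ _ _ _ _ lamkk). Qed.

Definition Psi (x y : V) := Ff y + kk * enorm (y - x) ^+ 2.
Lemma growth {x u} : prox_map f lam x = [set u] -> forall s, 0 < s ->
  exists2 al, 0 < al & forall y, (f y < +oo)%E ->
    al * (enorm (y - u) - s) <= Psi x y - Psi x u.
Proof.
move=> Hs s s0; have l0 := lam0.
have Pu : prox_map f lam x u by rewrite Hs.
have fu := prox_fin Pu.
have Pge : forall y, (f y < +oo)%E -> Psi x u <= Psi x y.
  by move=> y fy; exact: prox_ineq Pu fy.
have [a a0 [b Hb]] := coerc x u.
set B := `|b + Psi x u|.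
have B0 : 0 <= B := normr_ge0 _.
have Hb' : forall y, (f y < +oo)%E ->
    a * enorm (y - u) ^+ 2 - B <= Psi x y - Psi x u.
  move=> y fy; have := Hb y fy; have := ler_norm (b + Psi x u).
  rewrite -/B /Psi; lra.
set T := 1 + (1 + B) / a.
have T1 : 1 <= T by rewrite /T lerDl divr_ge0 //; [lra | exact: ltW].
have aT : 1 + B <= a * T.
  by rewrite /T mulrDr mulr1 mulrC divfK ?gt_eqF //; lra.
set K := [set y : V | forall i, `|y ord0 i - u ord0 i| <= 1 + T ^+ 2].
have cK : compact K := box_compact u (1 + T ^+ 2).
pose h' y := if enorm (y - u) < s then +oo%E else psi x y.
have lh : lsc h'.
  move=> z a' Ha.
  have [zs|zs] := boolP (enorm (z - u) < s).
    exists (s - enorm (z - u)); first by rewrite subr_gt0.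
    move=> y yz; rewrite /h'.
    have -> : enorm (y - u) < s.
      have := enormD (y - z) (z - u); rewrite (_ : y - z + (z - u) = y - u).
        lra.
      by rewrite addrA subrK.
    exact: ltry.
  rewrite /h' (negbTE zs) in Ha.
  have [d d0 Hd] := lsc_psi x z a' Ha.
  exists d => // y yz; rewrite /h'; case: ifP => _; [exact: ltry | exact: Hd].
have hpos : forall y, K y -> ((Psi x u)%:E < h' y)%E.
  move=> y Ky; rewrite /h'; case: ifP => ys; first exact: ltry.
  have yu : y != u.
    by apply/negP => /eqP yu; move: ys; rewrite yu subrr enorm0 s0.
  have nP : ~ prox_map f lam x y by rewrite Hs => /= E; move/eqP: yu.
  have [z Hz] : exists z, (psi x z < psi x y)%E.
    apply: contrapT => Hn; apply: nP => z; change (psi x y <= psi x z)%E.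
    by rewrite leNgt; apply/negP => H; apply: Hn; exists z.
  have Hu : (psi x u <= psi x z)%E by exact: Pu z.
  by rewrite /Psi -(psiE fu); exact: le_lt_trans Hu Hz.
have [c' c'gt Hc'] := key_compact K h' (Psi x u) cK lh hpos.
set mu := c' - Psi x u.
have mu0 : 0 < mu by rewrite subr_gt0.
have T0 : 0 < T by lra.
set al := Num.min 1 (mu / T).
have al1 : al <= 1 by rewrite /al ge_min lexx.
have al2 : al <= mu / T by rewrite /al ge_min lexx orbT.
have al0 : 0 < al by rewrite /al lt_min ltr01 divr_gt0.
exists al => // y fy.
set t := enorm (y - u).
have t0 : 0 <= t := enorm_ge0 _.
have [ts|ts] := ltP t s.
  have := Pge y fy; have : al * (t - s) <= 0 by nra.
  lra.
have [tT|tT] := leP t T.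
  have Ky : K y.
    move=> i; apply: le_trans (abs_le1 _) _; rewrite lerD2l.
    have := coord_le (y - u) i; rewrite !mxE -enorm2 -/t => H; apply: le_trans H _.
    nra.
  have := Hc' y Ky; rewrite /h' -/t ltNge ts /= (psiE fy) lee_fin => Hc.
  have h1 : al * (t - s) <= al * T by apply: ler_wpM2l; lra.
  have h2 : al * T <= mu / T * T by apply: ler_wpM2r; lra.
  rewrite divfK ?gt_eqF // in h2.
  rewrite /mu /Psi in h2; rewrite /Psi; lra.
have := Hb' y fy; rewrite -/t => H.
have h1 : a * T <= a * t by apply: ler_wpM2l; lra.
have h2 : t * (1 + B) <= t * (a * t) by apply: ler_wpM2l; lra.
have h3 : al * (t - s) <= t by nra.
have h4 : a * t ^+ 2 = t * (a * t) by rewrite expr2; ring.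
nra.
Qed.

Lemma cont_prox {x u} : prox_map f lam x = [set u] -> forall eps, 0 < eps ->
  exists2 d, 0 < d & forall z p, enorm (z - x) < d -> prox_map f lam z p ->
    enorm (p - u) <= eps.
Proof.
move=> Hs eps e0.
have e20 : 0 < eps / 2 by rewrite divr_gt0.
have [al al0 Hal] := growth Hs (eps / 2) e20.
have Pu : prox_map f lam x u by rewrite Hs.
have fu := prox_fin Pu.
have k0 := kk_gt0.
exists (al / (4 * kk)); first by rewrite divr_gt0 // mulr_gt0.
move=> z p zx Pp.
have fp := prox_fin Pp.
have H1 := prox_ineq Pp fu.
have H2 := Hal p fp.
have E := alg2 u p x z.
have H3 : Psi x p - Psi x u <= kk * (2 * dotp (p - u) (z - x)).
  by rewrite -E /Psi; lra.
have H4 := dotp_le (p - u) (z - x).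
have zx' : enorm (z - x) * (4 * kk) < al by rewrite -ltr_pdivlMr // mulr_gt0.
move: H2 H3 H4 zx'.
move: (enorm (p - u)) (enorm (z - x)) (dotp (p - u) (z - x)) (enorm_ge0 (p - u)) (enorm_ge0 (z - x)).
move=> t r D t0 r0 H2 H3 H4 zx'.
have h5 : kk * (2 * D) <= 2 * kk * (t * r) by nra.
have h6 : 2 * kk * (t * r) <= t * al / 2 by nra.
have : al * (t - eps) <= 0 by nra.
by rewrite pmulr_rle0 // subr_le0.
Qed.

Lemma strict_env x u : prox_map f lam x = [set u] ->
  strictly_differentiable_at (moreau_env f lam) x.
Proof.
move=> Hs; have k0 := kk_gt0.
exists ((2 * kk) *: (x - u)); split.
  by exists 1 => // y _; rewrite envE.
move=> eps e0.
set e' := eps / (4 * kk).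
have e'0 : 0 < e' by rewrite divr_gt0 // mulr_gt0.
have [d1 d10 Hd1] := cont_prox Hs e' e'0.
exists (Num.min d1 e'); first by rewrite lt_min d10 e'0.
move=> y z; rewrite !lt_min => /andP [y1 y2] /andP [z1 z2].
rewrite !envE /=.
have py := Hd1 y (pr y) y1 (prP y).
have pz := Hd1 z (pr z) z1 (prP z).
have U : Ee y - Ee z - dotp ((2 * kk) *: (x - u)) (y - z) <=
    kk * dotp (y - z) ((y - x) + (z - x) + 2 *: (u - pr z)).
  rewrite -(alg1 y z x u (pr z) kk).
  exact: (lin1 (Ee_le y (pr z) (prox_fin (prP z)))).
have L : kk * dotp (y - z) ((y - x) + (z - x) + 2 *: (u - pr y)) <=
    Ee y - Ee z - dotp ((2 * kk) *: (x - u)) (y - z).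
  rewrite -(alg1 y z x u (pr y) kk).
  exact: (lin2 (Ee_le z (pr y) (prox_fin (prP y)))).
have ek : kk * (4 * e') = eps by rewrite /e'; field; rewrite gt_eqF.
have pz' : enorm (u - pr z) <= e' by rewrite enormB.
have py' : enorm (u - pr y) <= e' by rewrite enormB.
have B1 := bndW y z x u (pr z) kk e' k0 (ltW y2) (ltW z2) pz'.
have B2 := bndW y z x u (pr y) kk e' k0 (ltW y2) (ltW z2) py'.
rewrite ek in B1 B2.
have B1' := ler_normlW B1.
have B2' := lerNnormlW B2.
rewrite ler_norml; apply/andP; split; [exact: le_trans B2' L | exact: le_trans U B1'].
Qed.

Lemma strictG_of_strictE x :
  strictly_differentiable_at (moreau_env f lam) x ->
  strictly_differentiable_at (conj (scaled_plus_j f lam)) x.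
Proof.
move=> [v [_ Hv]]; exists (x - lam *: v); split.
  by exists 1 => // y _; rewrite conjE.
move=> eps e0; have l0 := lam0.
have e1 : 0 < eps / (2 * lam) by rewrite divr_gt0 // mulr_gt0.
have [d1 d10 Hd1] := Hv _ e1.
exists (Num.min d1 (eps / 2)); first by rewrite lt_min d10 divr_gt0.
move=> y z; rewrite !lt_min => /andP [y1 y2] /andP [z1 z2].
have H1 := Hd1 y z y1 z1; rewrite !envE /= in H1.
rewrite !conjE /=.
have E : jsq y - lam * Ee y - (jsq z - lam * Ee z) - dotp (x - lam *: v) (y - z) =
  dotp (y - z) (2^-1 *: ((y - x) + (z - x))) - lam * (Ee y - Ee z - dotp v (y - z)).
  rewrite -alg3 dotpBl dotpZl; ring.
rewrite E.
have b1 : `|dotp (y - z) (2^-1 *: ((y - x) + (z - x)))| <= eps / 2 * enorm (y - z).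
  apply: le_trans (CS _ _) _; rewrite mulrC; apply: ler_wpM2r; first exact: enorm_ge0.
  rewrite enormZ ger0_norm ?invr_ge0 //.
  apply: le_trans (ler_wpM2l _ (enormD _ _)) _; first by rewrite invr_ge0.
  have := ltW y2; have := ltW z2; lra.
have b2 : `|lam * (Ee y - Ee z - dotp v (y - z))| <= eps / 2 * enorm (y - z).
  rewrite normrM gtr0_norm //; apply: le_trans (ler_wpM2l (ltW l0) H1) _.
  rewrite mulrA (_ : lam * (eps / (2 * lam)) = eps / 2) //.
  by field; rewrite gt_eqF.
apply: le_trans (ler_normB _ _) _.
have := lerD b1 b2; rewrite -mulrDl (_ : eps / 2 + eps / 2 = eps) //.
by field.
Qed.

Lemma single_of_diffG x v : is_gradient (conj (scaled_plus_j f lam)) x v ->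
  prox_map f lam x = [set v].
Proof.
move=> [_ Hg].
have key : forall p, prox_map f lam x p -> p = v.
  move=> p Pp; have fp := prox_fin Pp.
  have sub : forall z, dotp p (z - x) <=
      fine (conj (scaled_plus_j f lam) z) - fine (conj (scaled_plus_j f lam) x).
    move=> z.
    have H : ((dotp p z - lam * Ff p - jsq p)%:E <= conj (scaled_plus_j f lam) z)%E.
      apply: ereal_sup_ubound; exists p => //.
      by rewrite /scaled_plus_j (fE fp) -EFinM -EFinD opprD addrA.
    rewrite conjE lee_fin in H; rewrite (conj_eq Pp) conjE /=.
    rewrite dotpBr; lra.
  set q := p - v.
  apply/eqP; rewrite -subr_eq0 -/q; apply/eqP; apply: dotp_eq0.
  have [w0|wn0] := eqVneq (enorm q) 0.
    by rewrite -enorm2 w0 expr2 mulr0.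
  have wp : 0 < enorm q by rewrite lt_def wn0 enorm_ge0.
  have [d d0 Hd] := Hg (enorm q / 2) (divr_gt0 wp (ltr0Sn _ 1)).
  set t := d / (2 * enorm q).
  have t0 : 0 < t by rewrite divr_gt0 // mulr_gt0.
  have ez : x + t *: q - x = t *: q by rewrite addrC addKr.
  have ezn : enorm (x + t *: q - x) = t * enorm q by rewrite ez enormZ gtr0_norm.
  have tw : t * enorm q < d.
    have -> : t * enorm q = d / 2 by rewrite /t; field.
    lra.
  have H1 := Hd (x + t *: q); rewrite ezn in H1; have H2 := H1 tw.
  have H3 := sub (x + t *: q); rewrite ez in H2 H3.
  have H4 := ler_normlW H2.
  have E : dotp p (t *: q) - dotp v (t *: q) = t * enorm q ^+ 2.
    by rewrite -dotpBl -/q dotpZr enorm2.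
  have H5 : t * enorm q ^+ 2 <= enorm q / 2 * (t * enorm q) by lra.
  have H6 : t * enorm q ^+ 2 <= 0.
    move: H5; rewrite expr2; nra.
  have H7 : 0 < t * enorm q ^+ 2 by rewrite mulr_gt0 // exprn_gt0.
  by have := lt_le_trans H7 H6; rewrite ltxx.
apply/seteqP; split => [p Pp|_ ->] /=; first exact: key.
by have := key _ (prP x) => E; rewrite -E; exact: prP.
Qed.

Lemma g_fin {y} : (f y < +oo)%E -> scaled_plus_j f lam y = (lam * Ff y + jsq y)%:E.
Proof. by move=> fy; rewrite /scaled_plus_j (fE fy) -EFinM -EFinD. Qed.

Lemma g_inf {y} : ~ (f y < +oo)%E -> scaled_plus_j f lam y = +oo%E.
Proof. by move=> fy; rewrite /scaled_plus_j (nfE fy) gt0_muley ?lte_fin // addye. Qed.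

Lemma g_rel x u y : lam * Ff y + jsq y - (lam * Ff u + jsq u) - dotp (y - u) x
  = lam * (Psi x y - Psi x u).
Proof.
have E := alg4 y u x.
have -> : lam * (Psi x y - Psi x u) =
  lam * Ff y - lam * Ff u + lam * kk * (enorm (y - x) ^+ 2 - enorm (u - x) ^+ 2).
  by rewrite /Psi; ring.
rewrite lamkk -E; ring.
Qed.

Lemma single_of_ess x u : prox_map f lam x u ->
  ess_strongly_convex_at (scaled_plus_j f lam) u x -> prox_map f lam x = [set u].
Proof.
move=> Pu [_ [ps [[p0 p1 _ _] Hps]]].
have fu := prox_fin Pu.
apply/seteqP; split => [p Pp|_ ->] //=.
have fp := prox_fin Pp.
have e1 := prox_ineq Pp fu; have e2 := prox_ineq Pu fp.
have E := g_rel x u p.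
have E2 : lam * Ff p + jsq p = lam * Ff u + jsq u + dotp (p - u) x.
  have : Psi x p = Psi x u by apply/le_anti; rewrite e1 e2.
  move=> EP; rewrite EP subrr mulr0 in E; lra.
have := Hps p; rewrite (g_fin fp) (g_fin fu) E2 -EFinD => H.
have H0 : (ps (enorm (p - u)) <= 0)%E.
  by move: H; rewrite -[X in (_ <= X)%E]adde0 leeD2lE.
have [H1 _] := p1 _ (enorm_ge0 (p - u)).
have : ps (enorm (p - u)) = 0%E by apply/le_anti; rewrite H0 p0 // enorm_ge0.
by move/H1 => /enorm_eq0 /eqP; rewrite subr_eq0 => /eqP.
Qed.

Lemma ess_of_single x u : prox_map f lam x = [set u] ->
  ess_strongly_convex_at (scaled_plus_j f lam) u x.
Proof.
move=> Hs; have l0 := lam0.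
have Pu : prox_map f lam x u by rewrite Hs.
have fu := prox_fin Pu.
split; first by rewrite /in_dom (g_fin fu); exact: ltry.
pose good (q : R * R) := 0 <= q.1 /\ 0 <= q.2 /\ forall y, (f y < +oo)%E ->
  q.1 * (enorm (y - u) - q.2) <= lam * (Psi x y - Psi x u).
pose ps t := ereal_sup [set (q.1 * (t - q.2))%:E | q in good].
have Pge : forall y, (f y < +oo)%E -> 0 <= Psi x y - Psi x u.
  by move=> y fy; rewrite subr_ge0; exact: prox_ineq Pu fy.
have good0 : good (0, 0).
  split; first exact: lexx. split; first exact: lexx.
  by move=> y fy /=; rewrite mul0r; apply: mulr_ge0; [exact: ltW | exact: Pge].
have ps_ge0 : forall t, (0 <= ps t)%E.
  by move=> t; apply: ereal_sup_ubound; exists (0, 0) => //=; rewrite mul0r.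
have ps_ub : forall t q, good q -> ((q.1 * (t - q.2))%:E <= ps t)%E.
  by move=> t q gq; apply: ereal_sup_ubound; exists q.
exists ps; split.
  split.
  - by move=> t _; exact: ps_ge0.
  - move=> t t0; split.
      move=> pt0; apply: contrapT => tn0.
      have tp : 0 < t by rewrite lt_def t0 andbT; apply/eqP.
      have t20 : 0 < t / 2 by rewrite divr_gt0.
      have [al al0 Hal] := growth Hs (t / 2) t20.
      have gq : good (lam * al, t / 2).
        split; first by rewrite mulr_ge0 // ltW.
        split; first exact: ltW.
        by move=> y fy /=; rewrite -mulrA ler_pM2l //; exact: Hal.
      have := ps_ub t _ gq; rewrite pt0 lee_fin /=.
      have : 0 < lam * al * (t - t / 2) by rewrite !mulr_gt0 //; lra.
      by move=> H1 H2; have := lt_le_trans H1 H2; rewrite ltxx.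
    move=> ->; apply/le_anti; rewrite ps_ge0 andbT.
    apply/ereal_supP => _ [q [q1 [q2 _]] <-]; rewrite lee_fin.
    by rewrite sub0r mulrN oppr_le0 mulr_ge0.
  - move=> s t a s0 t0 a0 a1; apply/ereal_supP => _ [q gq <-].
    have E : q.1 * (a * s + (1 - a) * t - q.2) =
      a * (q.1 * (s - q.2)) + (1 - a) * (q.1 * (t - q.2)) by ring.
    rewrite E EFinD !EFinM; apply: leeD; apply: lee_wpmul2l.
    + by rewrite lee_fin.
    + exact: ps_ub.
    + by rewrite lee_fin subr_ge0.
    + exact: ps_ub.
  - move=> t b t0 Hb.
    have [_ [q gq <-] bq] := ereal_sup_gt Hb.
    rewrite lte_fin in bq.
    have q1 : 0 <= q.1 by case: gq.
    set gap := q.1 * (t - q.2) - b.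
    have gap0 : 0 < gap by rewrite subr_gt0.
    have q10 : 0 < q.1 + 1 by lra.
    exists (gap / (q.1 + 1)); first by rewrite divr_gt0.
    move=> s' s'0 hs.
    apply: lt_le_trans (ps_ub s' q gq); rewrite lte_fin.
    have h1 : q.1 * `|s' - t| <= q.1 * (gap / (q.1 + 1)) by apply: ler_wpM2l => //; exact: ltW.
    have h2 : q.1 * (gap / (q.1 + 1)) < gap.
      have -> : q.1 * (gap / (q.1 + 1)) = gap - gap / (q.1 + 1).
        by field; rewrite gt_eqF.
      have : 0 < gap / (q.1 + 1) by rewrite divr_gt0.
      lra.
    have h3 : - (q.1 * `|s' - t|) <= q.1 * (s' - t).
      by rewrite -mulrN; apply: ler_wpM2l => //; exact: lerNnormlW.
    have E : q.1 * (s' - q.2) = q.1 * (t - q.2) + q.1 * (s' - t) by ring.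
    have eg : gap = q.1 * (t - q.2) - b by [].
    rewrite E; move: h1 h2 h3 eg; clearbody gap; move=> h1 h2 h3 eg; lra.
move=> y; have [fy|fy] := pselect (f y < +oo)%E; last by rewrite (g_inf fy) leey.
rewrite (g_fin fy) (g_fin fu).
have Hp : (ps (enorm (y - u)) <= (lam * (Psi x y - Psi x u))%:E)%E.
  by apply/ereal_supP => _ [q [q1 [q2 gq]] <-]; rewrite lee_fin; exact: gq y fy.
rewrite -(g_rel x u y) in Hp.
apply: le_trans (leeD2l _ Hp) _; rewrite -!EFinD lee_fin.
lra.
Qed.

Lemma main_sec x :
  let g := scaled_plus_j f lam in
  [/\ ((exists u, prox_map f lam x = [set u]) <->
         strictly_differentiable_at (moreau_env f lam) x),
      (strictly_differentiable_at (moreau_env f lam) x <->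
         differentiable_at (conj g) x),
      (differentiable_at (conj g) x <->
         strictly_differentiable_at (conj g) x),
      (strictly_differentiable_at (conj g) x <->
         exists2 u, prox_map f lam x u & ess_strongly_convex_at g u x) &
      (forall v, is_gradient (conj g) x v -> prox_map f lam x = [set v])].
Proof.
move=> g.
have a_SE : (exists u, prox_map f lam x = [set u]) ->
    strictly_differentiable_at (moreau_env f lam) x.
  by move=> [u Hu]; exact: strict_env Hu.
have SE_SG := strictG_of_strictE x.
have SG_DG := @strict_diff R n (conj g) x.
have DG_a : differentiable_at (conj g) x -> exists u, prox_map f lam x = [set u].
  by move=> [v Hv]; exists v; exact: single_of_diffG Hv.
have a_D : (exists u, prox_map f lam x = [set u]) ->
    exists2 u, prox_map f lam x u & ess_strongly_convex_at g u x.
  move=> [u Hu]; exists u; first by rewrite Hu.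
  exact: ess_of_single Hu.
have D_a : (exists2 u, prox_map f lam x u & ess_strongly_convex_at g u x) ->
    exists u, prox_map f lam x = [set u].
  by move=> [u Pu Hu]; exists u; exact: single_of_ess Pu Hu.
split.
- split; first exact: a_SE.
  by move=> H; apply: DG_a; apply: SG_DG; exact: SE_SG.
- split; first by move=> H; apply: SG_DG; exact: SE_SG.
  by move=> H; apply: a_SE; exact: DG_a.
- split; last exact: SG_DG.
  by move=> H; apply: SE_SG; apply: a_SE; exact: DG_a.
- split; first by move=> H; apply: a_D; apply: DG_a; exact: SG_DG.
  by move=> H; apply: SE_SG; apply: a_SE; exact: D_a.
- by move=> v Hv; exact: single_of_diffG Hv.
Qed.

End Prox.




Theorem mainTheorem9 (R : realType) (n : nat) (f : 'rV[R]_n -> \bar R)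
  (lam : R) (x : 'rV[R]_n) :
  proper_fun f -> lsc f -> prox_bounded f ->
  (0 < prox_threshold f)%E ->
  0 < lam -> (lam%:E < prox_threshold f)%E ->
  in_dom f x ->
  let g := scaled_plus_j f lam in
  [/\ ((exists u, prox_map f lam x = [set u]) <->
         strictly_differentiable_at (moreau_env f lam) x),
      (strictly_differentiable_at (moreau_env f lam) x <->
         differentiable_at (conj g) x),
      (differentiable_at (conj g) x <->
         strictly_differentiable_at (conj g) x),
      (strictly_differentiable_at (conj g) x <->
         exists2 u, prox_map f lam x u & ess_strongly_convex_at g u x) &
      (forall v, is_gradient (conj g) x v -> prox_map f lam x = [set v])].
Proof.
move=> [fnm [y0 fy0]] lsf _ _ lam0 lamt _.
have [_ [lam' [lam'0 [w Hw]] <-] ltl] := ereal_sup_gt lamt.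
rewrite lte_fin in ltl.
have [C HC] : exists C : R, (C%:E <= moreau_env f lam' w)%E.
  move: Hw; case: (moreau_env f lam' w) => [r| |] Hw'.
  - by exists r.
  - by exists 0; rewrite leey.
  - by rewrite ltxx in Hw'.
have LB : forall y, (C%:E <= f y + ((2 * lam')^-1 * enorm (y - w) ^+ 2)%:E)%E.
  by move=> y; apply: le_trans HC _; apply: ereal_inf_lbound; exists y.
exact: (main_sec f fnm lsf y0 fy0 lam lam' C w lam0 ltl LB x).
Qed.
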